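(* Let $A: E\supseteq D(A)\to E$ be a densely defined, closed, real linear operator on a complex Banach lattice $E$. Let $u\in E_+$ and let $\varphi\in E'$ be strictly positive. If there exists a real $\mu_0\in\rho(A)$ with $-u\otimes\varphi\preceq R(\mu_0,A)\preceq u\otimes\varphi$, then $-u\otimes\varphi\preceq R(\mu,A)^n\preceq u\otimes\varphi$ for all real $\mu\in\rho(A)$ and all $n\in\mathbb{N}$.
   Context: A linear operator $A$ is real if $D(A) = (D(A)\cap E_{\mathbb{R}}) + i(D(A)\cap E_{\mathbb{R}})$ and $A$ maps $D(A)\cap E_{\mathbb{R}}$ into $E_{\mathbb{R}}$, where $E_{\mathbb{R}}$ is the real part of $E$. $R(\mu,A)=(\mu-A)^{-1}$. $\varphi$ strictly positive: $\langle\varphi,f\rangle>0$ for all $0\ne f\in E_+$. $u\otimes\varphi$ is $f\mapsto\langle\varphi,f\rangle u$. For bounded real operators, $T\succeq S$ (equivalently $S\preceq T$) means $T-cS$ maps $E_+$ into $E_+$ for some $c>0$. *)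

(* Defs.v *)
From HB Require Import structures.
From mathcomp Require Import all_boot all_order all_algebra.
From mathcomp Require Import all_classical all_reals all_analysis.
From mathcomp Require Import complex.
Set Implicit Arguments. Unset Strict Implicit. Unset Printing Implicit Defensive.
Import Order.TTheory GRing.Theory Num.Theory.
Import numFieldNormedType.Exports.
Local Open Scope classical_set_scope.
Local Open Scope ring_scope.
Local Open Scope complex_scope.

Section BanachLattice.
Variables (R : realType) (E : completeNormedModType R).

(** The real Banach lattice E_R = E, whose lattice structure is given by a
    join operation [join]; the order is  x <= y  :<->  join x y = y. *)
Definition lat_le (join : E -> E -> E) (x y : E) : Prop := join x y = y.
Definition lat_abs (join : E -> E -> E) (x : E) : E := join x (- x).

Definition banach_lattice (join : E -> E -> E) : Prop :=
  [/\ (forall x y, join x y = join y x),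
      (forall x y z, join x (join y z) = join (join x y) z) /\
      (forall x, join x x = x),
      (forall x y z, lat_le join x y -> lat_le join (x + z) (y + z)),
      (forall (a : R) x, 0 <= a -> lat_le join 0 x -> lat_le join 0 (a *: x))
    & (forall x y, lat_le join (lat_abs join x) (lat_abs join y) -> `|x| <= `|y|)].

(** The complex Banach lattice E_C = E_R + i E_R, modelled as pairs (x, y)
    standing for x + i y, with the (equivalent) product norm. *)
Definition cscale (z : R[i]) (p : E * E) : E * E :=
  (complex.Re z *: p.1 - complex.Im z *: p.2, complex.Re z *: p.2 + complex.Im z *: p.1).

Definition csubspace (D : set (E * E)) : Prop :=
  [/\ D 0, (forall p q, D p -> D q -> D (p + q))
    & (forall z p, D p -> D (cscale z p))].

Definition clinear_on (D : set (E * E)) (A : E * E -> E * E) : Prop :=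
  csubspace D /\
  (forall p q, D p -> D q -> A (p + q) = A p + A q) /\
  (forall z p, D p -> A (cscale z p) = cscale z (A p)).

Definition densely_defined (D : set (E * E)) : Prop := closure D = setT.

Definition closed_op (D : set (E * E)) (A : E * E -> E * E) : Prop :=
  closed [set pq : (E * E) * (E * E) | D pq.1 /\ pq.2 = A pq.1].

Definition real_op (D : set (E * E)) (A : E * E -> E * E) : Prop :=
  (forall x y, D (x, y) <-> (D (x, 0) /\ D (y, 0))) /\
  (forall x, D (x, 0) -> (A (x, 0)).2 = 0).

Definition bounded_op (B : E * E -> E * E) : Prop :=
  clinear_on setT B /\ exists M : R, forall p, `|B p| <= M * `|p|.

Definition is_resolvent (D : set (E * E)) (A : E * E -> E * E)
  (mu : R[i]) (B : E * E -> E * E) : Prop :=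
  bounded_op B /\
  (forall p, D (B p) /\ cscale mu (B p) - A (B p) = p) /\
  (forall f, D f -> B (cscale mu f - A f) = f).

Definition in_resolvent_set D A (mu : R[i]) : Prop :=
  exists B, is_resolvent D A mu B.

Definition in_dual (phi : E * E -> R[i]) : Prop :=
  (forall p q, phi (p + q) = phi p + phi q) /\
  (forall z p, phi (cscale z p) = z * phi p) /\
  (exists M : R, forall p, `|phi p| <= (M * `|p|)%:C).

(** E_+ = positive cone of E_R, seen inside E_C *)
Definition strictly_positive (join : E -> E -> E) (phi : E * E -> R[i]) : Prop :=
  forall f, lat_le join 0 f -> f <> 0 -> 0 < phi (f, 0).

Definition tensor (u : E) (phi : E * E -> R[i]) (p : E * E) : E * E :=
  cscale (phi p) (u, 0).

Definition opp_op (S : E * E -> E * E) (p : E * E) : E * E := - S p.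

Definition op_succeq (join : E -> E -> E) (T S : E * E -> E * E) : Prop :=
  exists c : R, 0 < c /\
    forall f, lat_le join 0 f ->
      let p := T (f, 0) - c *: S (f, 0) in p.2 = 0 /\ lat_le join 0 p.1.

End BanachLattice.

(* Main.v *)
Require Import Defs.
From HB Require Import structures.
From mathcomp Require Import all_boot all_order all_algebra.
From mathcomp Require Import all_classical all_reals all_analysis.
From mathcomp Require Import complex ring.
Import Order.TTheory GRing.Theory Num.Theory.
Local Open Scope ring_scope.
Local Open Scope complex_scope.
Set Implicit Arguments. Unset Strict Implicit. Unset Printing Implicit Defensive. Set Maximal Implicit Insertion.

Section Lat.
Variables (R : realType) (E : completeNormedModType R) (join : E -> E -> E).
Hypothesis HL : banach_lattice join.
Local Notation le := (lat_le join).

Lemma lle_refl x : le x x.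
Proof. by case: HL => _ [_ H] _ _ _; apply: H. Qed.

Lemma lle_trans x y z : le x y -> le y z -> le x z.
Proof. case: HL => _ [Ha _] _ _ _; rewrite /lat_le => h1 h2.
by rewrite -h2 Ha h1. Qed.

Lemma lle_antisym x y : le x y -> le y x -> x = y.
Proof. case: HL => Hc _ _ _ _; rewrite /lat_le => h1 h2.
by rewrite -h1 -{1}h2 Hc. Qed.

Lemma lle_addr z x y : le x y -> le (x + z) (y + z).
Proof. by case: HL => _ _ H _ _; apply: H. Qed.

Lemma lle_subP x y : le x y <-> le 0 (y - x).
Proof. split=> h.
  by have := lle_addr (- x) h; rewrite subrr.
by have := lle_addr x h; rewrite add0r subrK. Qed.

Lemma lle_add a b c d : le a b -> le c d -> le (a + c) (b + d).
Proof. move=> h1 h2; apply: (lle_trans (lle_addr c h1)).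
by rewrite ![b + _]addrC; apply: lle_addr. Qed.

Lemma lle_opp x y : le x y -> le (- y) (- x).
Proof. move/lle_subP=> h; apply/lle_subP. by rewrite opprK addrC. Qed.

Lemma lle_scale (a : R) x y : 0 <= a -> le x y -> le (a *: x) (a *: y).
Proof. case: HL => _ _ _ Hs _ ha /lle_subP h; apply/lle_subP.
by rewrite -scalerBr; apply: Hs. Qed.

Lemma lle_joinl x y : le x (join x y).
Proof. case: HL => _ [Ha Hi] _ _ _; by rewrite /lat_le Ha Hi. Qed.

Lemma lle_joinr x y : le y (join x y).
Proof. case: HL => Hc _ _ _ _; rewrite Hc; exact: lle_joinl. Qed.

Lemma lle_join_lub x y a : le x a -> le y a -> le (join x y) a.
Proof. case: HL => _ [Ha _] _ _ _; rewrite /lat_le => h1 h2.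
by rewrite -Ha h2 h1. Qed.

Lemma joinD a b z : join (a + z) (b + z) = join a b + z.
Proof. apply: lle_antisym.
  by apply: lle_join_lub; apply: lle_addr; [apply: lle_joinl|apply: lle_joinr].
have h : le (join a b) (join (a + z) (b + z) - z).
  apply: lle_join_lub.
  - have := lle_addr (- z) (lle_joinl (a + z) (b + z)); by rewrite addrK.
  - have := lle_addr (- z) (lle_joinr (a + z) (b + z)); by rewrite addrK.
by have := lle_addr z h; rewrite subrK. Qed.

Lemma pos_decomp x : x = join x 0 - join (- x) 0.
Proof. apply/eqP; rewrite eq_sym subr_eq; apply/eqP.
have := joinD (- x) 0 x; rewrite addNr add0r addrC => <-.
case: HL => Hc _ _ _ _; by rewrite Hc. Qed.

Lemma abs_ge0 x : le 0 (lat_abs join x).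
Proof.
have h : le 0 (lat_abs join x + lat_abs join x).
  have := lle_add (lle_joinl x (- x)) (lle_joinr x (- x)).
  by rewrite subrr.
have h2 : (0 : R) <= 2^-1 by rewrite invr_ge0.
have := lle_scale h2 h.
have -> : lat_abs join x + lat_abs join x = (2 : R) *: lat_abs join x.
  by rewrite scalerDl scale1r.
by rewrite scaler0 scalerA mulVf ?pnatr_eq0 // scale1r.
Qed.

Lemma abs_id a : le 0 a -> lat_abs join a = a.
Proof. move=> h; rewrite /lat_abs; apply: lle_antisym.
  apply: lle_join_lub; first exact: lle_refl.
  apply: (lle_trans _ h); by have := lle_opp h; rewrite oppr0.
exact: lle_joinl. Qed.

Lemma norm_mono x y : le 0 x -> le x y -> `|x| <= `|y|.
Proof. case: HL => _ _ _ _ Hn h1 h2; apply: Hn.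
by rewrite abs_id // abs_id //; exact: lle_trans h2. Qed.

Lemma norm_abs x : `|lat_abs join x| <= `|x|.
Proof. case: HL => _ _ _ _ Hn; apply: Hn.
rewrite abs_id; [exact: lle_refl| exact: abs_ge0]. Qed.

Lemma norm_pos x : `|join x 0| <= `|x|.
Proof. apply: le_trans (norm_abs x); apply: norm_mono; first exact: lle_joinr.
apply: lle_join_lub; [exact: lle_joinl| exact: abs_ge0]. Qed.

Lemma norm_neg x : `|join (- x) 0| <= `|x|.
Proof. apply: le_trans (norm_abs x); apply: norm_mono; first exact: lle_joinr.
apply: lle_join_lub; [exact: lle_joinr| exact: abs_ge0]. Qed.

Lemma norm_sandwich a x : le 0 a -> le (- a) x -> le x a -> `|x| <= `|a|.
Proof. case: HL => _ _ _ _ Hn ha h1 h2; apply: Hn.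
rewrite (abs_id ha); apply: lle_join_lub => //.
by have := lle_opp h1; rewrite opprK. Qed.

Lemma scale_mono u (a b : R) : le 0 u -> a <= b -> le (a *: u) (b *: u).
Proof. move=> hu hab; apply/lle_subP; rewrite -scalerBl.
have := lle_scale (a := b - a) _ hu; rewrite scaler0; apply.
by rewrite subr_ge0. Qed.

End Lat.

Unset Maximal Implicit Insertion.

Section Ops.
Variables (R : realType) (E : completeNormedModType R).

Lemma cscale_real (r : R) (p : E * E) : Defs.cscale r%:C p = r *: p.
Proof. case: p => a b; by rewrite /Defs.cscale /= !scale0r subr0 addr0. Qed.

Lemma cscale_i (b : E) : Defs.cscale 'i%C (b, 0) = (0, b).
Proof. by rewrite /Defs.cscale /= !scale0r !scaler0 scale1r subr0 add0r. Qed.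

Lemma norm_pair0 (x : E) : `|(x, 0 : E)| = `|x|.
Proof. rewrite prod_normE /= normr0; apply: max_l => //. Qed.

Lemma bop_add (S : E * E -> E * E) : bounded_op S -> forall p q, S (p + q) = S p + S q.
Proof. by case=> [[_ [H _]] _] p q; apply: H. Qed.

Lemma bop_scale (S : E * E -> E * E) : bounded_op S -> forall (r : R) p, S (r *: p) = r *: S p.
Proof. case=> [[_ [_ H]] _] r p; by rewrite -!cscale_real H. Qed.

Lemma bop_opp (S : E * E -> E * E) : bounded_op S -> forall p, S (- p) = - S p.
Proof. move=> h p; by rewrite -scaleN1r bop_scale // scaleN1r. Qed.

Lemma bop_sub (S : E * E -> E * E) : bounded_op S -> forall p q, S (p - q) = S p - S q.
Proof. move=> h p q; by rewrite bop_add // bop_opp. Qed.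

Lemma bop_0 (S : E * E -> E * E) : bounded_op S -> S 0 = 0.
Proof. move=> h; have := bop_sub h 0 0; by rewrite !subrr. Qed.

End Ops.

Section Res.
Variables (R : realType) (E : completeNormedModType R) (D : set (E * E)) (A : E * E -> E * E).

Lemma res_id (a b : R) S1 S2 : is_resolvent D A a%:C S1 -> is_resolvent D A b%:C S2 ->
  forall p, S2 p = S1 p + (a - b) *: S2 (S1 p).
Proof.
move=> [h1 [h1a h1b]] [h2 [h2a h2b]] p.
have [hD he] := h1a p.
have := h2b _ hD; rewrite cscale_real.
have -> : b *: S1 p - A (S1 p) = (b - a) *: S1 p + (a *: S1 p - A (S1 p)).
  by rewrite scalerBl addrA subrK.
rewrite -[a *: S1 p]cscale_real he bop_add // bop_scale //.
set y := S2 (S1 p); set x := S1 p => e3; rewrite -e3.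
by rewrite -[a - b]opprB scaleNr addrAC subrr add0r.
Qed.

Lemma pair_add (a b c d : E) : (a, b) + (c, d) = (a + c, b + d).
Proof. by []. Qed.

Lemma pair_scale (r : R) (a b : E) : r *: ((a, b) : E * E) = (r *: a, r *: b).
Proof. by []. Qed.
Lemma pair_sub (a b c d : E) : (a, b) - (c, d) = (a - c, b - d).
Proof. by []. Qed.

Lemma real_pair (p : E * E) : p.2 = 0 -> p = (p.1, 0).
Proof. by case: p => ? ? /= ->. Qed.

Hypotheses (HA : clinear_on D A) (HR : real_op D A).

Lemma res_real (mu : R) S : is_resolvent D A mu%:C S -> forall x, (S (x, 0)).2 = 0.
Proof.
move=> [hb [ha hc]] x.
case: (ha (x, 0)) => hD he.
move: hD he; case: (S (x, 0)) => a b /= hD he.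
case: HR => HR1 HR2; case/HR1: hD => hDa hDb.
case: HA => [[hD0 hDadd hDsc] [hAadd hAsc]].
have ep : (a, b) = (a, 0) + Defs.cscale 'i (b, 0).
  by rewrite cscale_i pair_add addr0 add0r.
have eA : A (a, b) = ((A (a, 0)).1, (A (b, 0)).1).
  rewrite ep hAadd //; last exact: hDsc.
  rewrite hAsc // [A (b, 0)]real_pair ?HR2 // [A (a, 0)]real_pair ?HR2 //.
  by rewrite cscale_i pair_add addr0 add0r.
move: he; rewrite eA cscale_real => /(congr1 snd) /= he2.
have := hc _ hDb; rewrite cscale_real.
have -> : mu *: ((b, 0) : E * E) - A (b, 0) = 0.
  rewrite [A (b, 0)]real_pair ?HR2 //.
  by rewrite pair_scale pair_sub /= he2 scaler0 subr0.
by rewrite (bop_0 hb) => /(congr1 fst).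
Qed.

End Res.

Section Main.
Variables (R : realType) (E : completeNormedModType R) (join : E -> E -> E)
  (u : E) (phi : E * E -> R[i]).
Hypotheses (HL : banach_lattice join) (Hu : lat_le join 0 u)
  (Hphi : in_dual phi) (Hpos : strictly_positive join phi).
Local Notation le := (lat_le join).

Definition psi (f : E) : R := complex.Re (phi (f, 0)).

Lemma phi0 : phi 0 = 0.
Proof. case: Hphi => Hadd _; have h := Hadd 0 0; rewrite addr0 in h.
have := congr1 (fun z => z - phi 0) h; rewrite subrr addrK => h'; exact: esym h'. Qed.

Lemma phi_pos f : le 0 f -> phi (f, 0) = (psi f)%:C /\ 0 <= psi f.
Proof.
move=> hf; rewrite /psi; have [->|fn0] := eqVneq f 0.
  have -> : ((0 : E), (0 : E)) = 0 by [].
  by rewrite phi0.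
have := Hpos hf (elimN eqP fn0); rewrite ltcE /=.
by case: (phi (f, 0)) => a b /= /andP [/eqP -> ha]; split => //; exact: ltW.
Qed.

Lemma psi_bound : exists M : R, 0 <= M /\ forall f, psi f <= M * `|f|.
Proof.
case: Hphi => _ [_ [M HM]]; exists `|M|; split => // f.
have h := HM (f, 0); rewrite norm_pair0 in h.
have h2 := le_trans (normc_ge_Re (phi (f, 0))) h; rewrite lecR in h2.
apply: le_trans (ler_norm _) _; apply: le_trans h2 _.
by apply: ler_wpM2r => //; exact: ler_norm.
Qed.

Definition sw (a : R) (x : E) := le ((- a) *: u) x /\ le x (a *: u).

Lemma sw_add a b x y : sw a x -> sw b y -> sw (a + b) (x + y).
Proof. move=> [h1 h2] [h3 h4]; split.
  rewrite opprD scalerDl. have H := lle_add HL h1 h3. exact H.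
rewrite scalerDl. have H := lle_add HL h2 h4. exact H. Qed.

Lemma sw_opp a x : sw a x -> sw a (- x).
Proof. move=> [h1 h2]; split.
  rewrite scaleNr; exact: (lle_opp HL h2).
by have := lle_opp HL h1; rewrite scaleNr opprK. Qed.

Lemma sw_weak a b x : a <= b -> sw a x -> sw b x.
Proof. move=> hab [h1 h2]; split.
  refine (lle_trans HL _ h1); apply: (scale_mono HL Hu); by rewrite lerN2.
exact: (lle_trans HL h2 (scale_mono HL Hu hab)). Qed.

Lemma sw_norm a x : 0 <= a -> sw a x -> `|x| <= a * `|u|.
Proof. move=> ha [h1 h2].
have hau : le 0 (a *: u) by have := lle_scale HL ha Hu; rewrite scaler0.
rewrite -(ger0_norm ha) -normrZ; apply: (norm_sandwich HL hau) => //.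
by rewrite -scaleNr. Qed.

Definition Bound (S : E * E -> E * E) := exists K : R, 0 <= K /\
  forall f, le 0 f -> (S (f, 0)).2 = 0 /\ sw (K * psi f) (S (f, 0)).1.

Lemma Bound_ext S S' : (forall p, S p = S' p) -> Bound S' -> Bound S.
Proof. move=> e [K [hK H]]; exists K; split => // f hf; by rewrite e; apply: H. Qed.

Lemma Bound_add S1 S2 : Bound S1 -> Bound S2 -> Bound (fun p => S1 p + S2 p).
Proof. move=> [K1 [hK1 H1]] [K2 [hK2 H2]]; exists (K1 + K2); split.
  exact: addr_ge0.
move=> f hf; have [e1 s1] := H1 f hf; have [e2 s2] := H2 f hf; split.
  by rewrite /= e1 e2 addr0.
by rewrite mulrDl; apply: sw_add. Qed.

Lemma tensor_pos f : le 0 f -> Defs.tensor u phi (f, 0) = (psi f *: u, 0).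
Proof. move=> hf; have [e _] := phi_pos hf.
by rewrite /Defs.tensor e cscale_real pair_scale scaler0. Qed.

Lemma hyp_to_Bound S : op_succeq join S (opp_op (Defs.tensor u phi)) ->
  op_succeq join (Defs.tensor u phi) S -> Bound S.
Proof.
move=> [c1 [hc1 H1]] [c2 [hc2 H2]]; exists (c1 + c2^-1); split.
  by rewrite addr_ge0 ?invr_ge0 ?ltW.
move=> f hf; move: (H1 f hf) (H2 f hf); rewrite /opp_op tensor_pos //= => - [ea eb] [ec ed].
have hpsi := (phi_pos hf).2.
split; first by move: ea; rewrite oppr0 scaler0 subr0.
have l1 := proj2 (lle_subP HL _ _) eb.
have l2 := proj2 (lle_subP HL _ _) ed.
have hci : 0 <= c2^-1 by rewrite invr_ge0 ltW.
have l3 := lle_scale HL hci l2.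
rewrite scalerA mulVf ?gt_eqF // scale1r scalerA in l3.
rewrite scalerN scalerA -scaleNr in l1.
split.
  refine (lle_trans HL _ l1); apply: (scale_mono HL Hu).
  by rewrite lerN2 ler_wpM2r // lerDl invr_ge0 ltW.
refine (lle_trans HL l3 _); apply: (scale_mono HL Hu).
by rewrite ler_wpM2r // lerDr ltW.
Qed.

Lemma Bound_to_concl S : Bound S ->
  op_succeq join S (opp_op (Defs.tensor u phi)) /\ op_succeq join (Defs.tensor u phi) S.
Proof.
move=> [K [hK H]]; have hK1 : 0 < K + 1 by rewrite ltr_wpDl.
split.
  exists (K + 1); split => // f hf; rewrite /opp_op tensor_pos //=.
  have [e [s1 s2]] := H f hf; have hpsi := (phi_pos hf).2.
  split; first by rewrite e oppr0 scaler0 subr0.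
  rewrite scalerN scalerA -scaleNr; apply: (proj1 (lle_subP HL _ _)).
  refine (lle_trans HL _ s1); apply: (scale_mono HL Hu).
  by rewrite lerN2 ler_wpM2r // lerDl.
exists (K + 1)^-1; split; first by rewrite invr_gt0.
move=> f hf; rewrite tensor_pos //=.
have [e [s1 s2]] := H f hf; have hpsi := (phi_pos hf).2.
split; first by rewrite e scaler0 subr0.
apply: (proj1 (lle_subP HL _ _)).
have hci : 0 <= (K + 1)^-1 by rewrite invr_ge0 ltW.
have l3 := lle_scale HL hci s2.
rewrite scalerA in l3; refine (lle_trans HL l3 _); apply: (scale_mono HL Hu).
rewrite mulrA -[X in _ <= X]mul1r; apply: ler_wpM2r => //.
have hKK : K <= K + 1 by rewrite lerDl.
apply: le_trans (ler_wpM2l hci hKK) _.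
by rewrite mulVf ?gt_eqF.
Qed.

End Main.


Section Core.
Variables (R : realType) (E : completeNormedModType R) (join : E -> E -> E)
  (D : set (E * E)) (A : E * E -> E * E)
  (u : E) (phi : E * E -> R[i]) (mu0 mu : R) (B0 B : E * E -> E * E).
Hypotheses (HL : banach_lattice join) (Hu : lat_le join 0 u)
  (Hphi : in_dual phi) (Hpos : strictly_positive join phi)
  (HA : clinear_on D A) (HR : real_op D A)
  (HB0 : is_resolvent D A mu0%:C B0) (HB : is_resolvent D A mu%:C B)
  (Hb0 : Bound join u phi B0).
Local Notation le := (lat_le join).
Local Notation k := (mu0 - mu).

Let bB0 : bounded_op B0. Proof. by case: HB0. Qed.
Let bB : bounded_op B. Proof. by case: HB. Qed.

Definition opIk (q : E * E) := q + k *: B q.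

Lemma RI2 p : B p = B0 p + k *: B (B0 p).
Proof. exact: res_id HB0 HB p. Qed.

Lemma RI1 p : B p = B0 p + k *: B0 (B p).
Proof. have e := res_id HB HB0 p.
rewrite e -addrA -scalerDl -[mu0 - mu]opprB subrr scale0r addr0 //.
Qed.

Lemma comm p : B0 (B p) = B (B0 p).
Proof.
have [k0|kn0] := eqVneq k 0.
  have eB : forall q, B q = B0 q by move=> q; rewrite RI2 k0 scale0r addr0.
  by rewrite !eB.
apply: (scalerI kn0); apply: (@addrI _ (B0 p)); by rewrite -RI1 -RI2.
Qed.

Lemma comm_iter m p : B0 (iter m B p) = iter m B (B0 p).
Proof. elim: m => [//|m IH] /=; by rewrite comm IH. Qed.

Lemma B_left z : B z = B0 (opIk z).
Proof. by rewrite /opIk bop_add // bop_scale // -RI1. Qed.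

Lemma B_right z : B z = opIk (B0 z).
Proof. by rewrite /opIk -RI2. Qed.

Lemma dec1 p : B p = B0 p + B0 (k *: opIk (B0 p)).
Proof. by rewrite bop_scale // -B_left -RI2. Qed.

Lemma dec2 m p : iter m.+2 B p = B0 (opIk (opIk (iter m B (B0 p)))).
Proof. by rewrite /= B_left B_right comm_iter. Qed.

Definition Good (V : E * E -> E * E) := (forall x, (V (x, 0)).2 = 0) /\ exists M : R, 0 <= M /\ forall x, `|V (x, 0)| <= M * `|x|.

Lemma Good_id : Good (fun q => q).
Proof. split => // ; exists 1; split => // x; by rewrite norm_pair0 mul1r. Qed.

Lemma Good_comp V1 V2 : Good V1 -> Good V2 -> Good (fun q => V2 (V1 q)).
Proof.
move=> [r1 [M1 [hM1 n1]]] [r2 [M2 [hM2 n2]]]; split.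
  by move=> x /=; rewrite [V1 (x, 0)]real_pair ?r1 // r2.
exists (M2 * M1); split; first exact: mulr_ge0.
move=> x; rewrite [V1 (x, 0)]real_pair ?r1 //.
apply: le_trans (n2 _) _; rewrite -mulrA; apply: ler_wpM2l => //.
by rewrite -norm_pair0 -real_pair ?r1.
Qed.

Lemma Good_add V1 V2 : Good V1 -> Good V2 -> Good (fun q => V1 q + V2 q).
Proof.
move=> [r1 [M1 [hM1 n1]]] [r2 [M2 [hM2 n2]]]; split.
  by move=> x /=; rewrite r1 r2 addr0.
exists (M1 + M2); split; first exact: addr_ge0.
move=> x; apply: le_trans (ler_normD _ _) _; rewrite mulrDl; exact: lerD.
Qed.

Lemma Good_scale (c : R) V : Good V -> Good (fun q => c *: V q).
Proof.
move=> [r1 [M1 [hM1 n1]]]; split.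
  by move=> x /=; rewrite r1 scaler0.
exists (`|c| * M1); split; first by rewrite mulr_ge0.
move=> x; rewrite normrZ -mulrA; apply: ler_wpM2l => //.
Qed.

Lemma Good_B : Good B.
Proof. split; first by move=> x; exact: (res_real HA HR HB x).
case: bB => _ [M HM]; exists `|M|; split => // x.
apply: le_trans (HM _) _; rewrite norm_pair0; apply: ler_wpM2r => //; exact: ler_norm.
Qed.

Lemma Good_iter m : Good (iter m B).
Proof. elim: m => [|m IH]; first exact: Good_id.
exact: (Good_comp IH Good_B). Qed.

Lemma Good_opIk : Good opIk.
Proof. exact: (Good_add Good_id (Good_scale k Good_B)). Qed.

Lemma B0_real : exists C : R, 0 <= C /\ forall h, (B0 (h, 0)).2 = 0 /\
  sw join u (C * `|h|) (B0 (h, 0)).1.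
Proof.
case: Hb0 => K0 [hK0 H0]; case: (psi_bound Hphi) => Mp [hMp HMp].
exists (K0 * Mp + K0 * Mp); split; first by rewrite addr_ge0 // mulr_ge0.
move=> h.
have ep : ((h, 0) : E * E) = (join h 0, 0) - (join (- h) 0, 0).
  by rewrite pair_sub subrr -(pos_decomp HL).
have hp : le 0 (join h 0) by exact: (lle_joinr HL h 0).
have hn : le 0 (join (- h) 0) by exact: (lle_joinr HL (- h) 0).
have [e1 s1] := H0 _ hp; have [e2 s2] := H0 _ hn.
rewrite ep bop_sub //=; split; first by rewrite e1 e2 subrr.
apply: (sw_weak HL Hu _ (sw_add HL s1 (sw_opp HL s2))).
rewrite mulrDl; apply: lerD; rewrite -mulrA; apply: ler_wpM2l => //.
  apply: le_trans (HMp _) _; apply: ler_wpM2l => //; exact: (norm_pos HL).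
apply: le_trans (HMp _) _; apply: ler_wpM2l => //; exact: (norm_neg HL).
Qed.

Lemma L2 V : Good V -> Bound join u phi (fun p => B0 (V (B0 p))).
Proof.
move=> [rV [MV [hMV nV]]].
case: Hb0 => K0 [hK0 H0]; case: B0_real => C [hC HC].
exists (C * (MV * (K0 * `|u|))); split; first by rewrite !mulr_ge0.
move=> f hf; have [e s] := H0 f hf; have hpsi := (phi_pos Hphi Hpos hf).2.
rewrite [B0 (f, 0)]real_pair // [V (_, 0)]real_pair //.
have [e2 s2] := HC ((V ((B0 (f, 0)).1, 0)).1); split => //.
apply: (sw_weak HL Hu _ s2).
have hg := sw_norm HL Hu (mulr_ge0 hK0 hpsi) s.
have hh : `|(V ((B0 (f, 0)).1, 0)).1| <= MV * (K0 * psi phi f * `|u|).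
  set g := (B0 (f, 0)).1; rewrite -norm_pair0 -(real_pair (rV g)); apply: le_trans (nV _) _.
  exact: ler_wpM2l.
apply: le_trans (ler_wpM2l hC hh) _.
by rewrite le_eqVlt; apply/orP; left; apply/eqP; ring.
Qed.

Lemma Bound_iter n : (0 < n)%N -> Bound join u phi (iter n B).
Proof.
case: n => [//|[|m]] _.
  apply: (Bound_ext (S' := fun p => B0 p + B0 ((fun q => k *: opIk q) (B0 p)))).
    by move=> p /=; exact: dec1.
  exact: (Bound_add HL Hb0 (L2 (Good_scale k Good_opIk))).
apply: (Bound_ext (S' := fun p => B0 ((fun q => opIk (opIk (iter m B q))) (B0 p)))).
  by move=> p; exact: dec2.
exact: (L2 (Good_comp (Good_comp (Good_iter m) Good_opIk) Good_opIk)).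
Qed.

End Core.


Theorem proposition4p1 (R : realType) (E : completeNormedModType R)
  (join : E -> E -> E) (D : set (E * E)) (A : E * E -> E * E)
  (u : E) (phi : E * E -> R[i]) :
  banach_lattice join ->
  clinear_on D A -> densely_defined D -> closed_op D A -> real_op D A ->
  lat_le join 0 u ->
  in_dual phi -> strictly_positive join phi ->
  (exists (mu0 : R) (B0 : E * E -> E * E),
     is_resolvent D A mu0%:C B0 /\
     op_succeq join B0 (opp_op (tensor u phi)) /\
     op_succeq join (tensor u phi) B0) ->
  forall (mu : R) (B : E * E -> E * E), is_resolvent D A mu%:C B ->
  forall n : nat, (0 < n)%N ->
    op_succeq join (iter n B) (opp_op (tensor u phi)) /\
    op_succeq join (tensor u phi) (iter n B).
Proof.
move=> HL HA _ _ HR Hu Hphi Hpos [mu0 [B0 [HB0 [h1 h2]]]] mu B HB n hn.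
have Hb0 := hyp_to_Bound HL Hu Hphi Hpos h1 h2.
exact: (Bound_to_concl HL Hu Hphi Hpos (Bound_iter HL Hu Hphi Hpos HA HR HB0 HB Hb0 hn)).
Qed.
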